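(* Let $n\ge 2$ and let $A\in\Sigma_{n^2}$. Then the number $\xi_n$ of all matrices $B\in\Sigma_{n^2}$ which are disjoint with $A$ does not depend on $A$ and is equal to $$\xi_n=\sum_{\overline{A}\in\overline{\mathfrak{B}}_n,\ \varepsilon(\overline{A})\ge 2}(-1)^{\varepsilon(\overline{A})}\,|\overline{A}|\prod_{i=0}^{n-2}\left[(n-i)!\right]^{\psi_i(\overline{A})}.$$
   Context: $\Sigma_{n^2}$ is the set of $n^2\times n^2$ binary matrices which, when partitioned into $n^2$ non-intersecting consecutive $n\times n$ blocks, contain exactly one $1$ in each row, each column and each block (S-permutation matrices). Two binary matrices $(a_{ij}),(b_{ij})$ of equal size are disjoint if there are no $i,j$ with $a_{ij}=b_{ij}=1$. $\mathfrak{B}_n$ is the set of $n\times n$ binary matrices. For $A\in\mathfrak{B}_n$, $r_k(A)$ (resp. $c_k(A)$) is the number of rows (resp. columns) of $A$ with exactly $k$ ones, $\psi_k(A)=r_k(A)+c_k(A)$, and $\varepsilon(A)$ is the total number of ones of $A$. $A\sim B$ iff $B$ is obtained from $A$ by permuting rows; $\overline{A}$ denotes the equivalence class of $A$, $|\overline{A}|$ its cardinality, $\overline{\mathfrak{B}}_n=\mathfrak{B}_n/\!\sim$; $\psi_k,\varepsilon$ are defined on classes via any representative. *)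

(* Defs.v *)
From HB Require Import structures.
From mathcomp Require Import all_boot all_order all_algebra all_fingroup.
Set Implicit Arguments. Unset Strict Implicit. Unset Printing Implicit Defensive.

(* Binary matrices are 'M[bool]_(m,m); entry true = 1. *)

Definition is_Sperm (n : nat) (A : 'M[bool]_(n * n)) : bool :=
  [&& [forall i, #|[set j | A i j]| == 1],
      [forall j, #|[set i | A i j]| == 1] &
      [forall a : 'I_n, forall b : 'I_n,
         #|[set p : 'I_(n * n) * 'I_(n * n) |
              [&& A p.1 p.2, p.1 %/ n == a & p.2 %/ n == b]]| == 1]].

Definition mx_disjoint (m : nat) (A B : 'M[bool]_m) : bool :=
  [forall i, forall j, ~~ (A i j && B i j)].

Definition r_ (n k : nat) (A : 'M[bool]_n) : nat :=
  #|[set i | #|[set j | A i j]| == k]|.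
Definition c_ (n k : nat) (A : 'M[bool]_n) : nat :=
  #|[set j | #|[set i | A i j]| == k]|.
Definition psi_ (n k : nat) (A : 'M[bool]_n) : nat := r_ k A + c_ k A.
Definition eps (n : nat) (A : 'M[bool]_n) : nat := #|[set p | A p.1 p.2]|.

Definition rowclass (n : nat) (A : 'M[bool]_n) : {set 'M[bool]_n} :=
  [set B | [exists s : 'S_n, B == row_perm s A]].

Definition Bbar_classes (n : nat) : {set {set 'M[bool]_n}} :=
  [set rowclass A | A : 'M[bool]_n].

Definition crep (n : nat) (C : {set 'M[bool]_n}) : 'M[bool]_n :=
  odflt (const_mx false) [pick B in C].

(* Main.v *)
Require Import Defs.
From HB Require Import structures.
From mathcomp Require Import all_boot all_order all_algebra all_fingroup.
From mathcomp Require Import zify.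
Import GRing.Theory Num.Theory.
Set Implicit Arguments. Unset Strict Implicit. Unset Printing Implicit Defensive.

Section Idx.
Variable n : nat.

Lemma hi_proof (i : 'I_(n * n)) : i %/ n < n.
Proof.
case: n i => [|m] [i Hi] /=; first by rewrite muln0 in Hi.
by rewrite ltn_divLR.
Qed.

Lemma lo_proof (i : 'I_(n * n)) : i %% n < n.
Proof.
case: n i => [|m] [i Hi] /=; first by rewrite muln0 in Hi.
by rewrite ltn_pmod.
Qed.

Definition hi (i : 'I_(n * n)) : 'I_n := Ordinal (hi_proof i).
Definition lo (i : 'I_(n * n)) : 'I_n := Ordinal (lo_proof i).

Lemma mk_proof (a x : 'I_n) : a * n + x < n * n.
Proof. case: a x => [a Ha] [x Hx] /=; nia. Qed.

Definition mk (a x : 'I_n) : 'I_(n * n) := Ordinal (mk_proof a x).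

Lemma hi_mk a x : hi (mk a x) = a.
Proof.
apply: val_inj => /=; rewrite divnMDl; last by case: a => a /=; lia.
by rewrite divn_small // addn0.
Qed.

Lemma lo_mk a x : lo (mk a x) = x.
Proof. by apply: val_inj => /=; rewrite modnMDl modn_small. Qed.

Lemma mk_hilo i : mk (hi i) (lo i) = i.
Proof. by apply: val_inj => /=; rewrite -divn_eq. Qed.

Lemma mkP i : exists a x, i = mk a x.
Proof. by exists (hi i), (lo i); rewrite mk_hilo. Qed.

Lemma mk_eq a x b y : (mk a x == mk b y) = (a == b) && (x == y).
Proof.
case: (boolP (_ && _)) => [/andP[/eqP-> /eqP->]|H]; first exact: eqxx.
apply/negbTE; apply: contra H => /eqP E.
have := congr1 hi E; have := congr1 lo E.
by rewrite !hi_mk !lo_mk => -> ->; rewrite !eqxx.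
Qed.

Lemma divn_hi (i : 'I_(n * n)) (a : 'I_n) : (i %/ n == a) = (hi i == a).
Proof. by []. Qed.

End Idx.
Section Phi.
Variable n : nat.
Notation PP := ({ffun 'I_n -> 'S_n} * {ffun 'I_n -> 'S_n})%type.

Definition Phi (st : PP) : 'M[bool]_(n * n) :=
  \matrix_(i, j) ((st.1 (hi i) (hi j) == lo i) && (st.2 (hi j) (hi i) == lo j)).

Lemma Phi_mk st a x b y :
  Phi st (mk a x) (mk b y) = (st.1 a b == x) && (st.2 b a == y).
Proof. by rewrite mxE !hi_mk !lo_mk. Qed.

Lemma perm_eqV (s : 'S_n) b x : (s b == x) = (b == (s^-1)%g x).
Proof.
by apply/eqP/eqP => [<-|->]; rewrite ?permK ?permKV.
Qed.

Lemma mk_hilo' (i : 'I_(n * n)) a : hi i = a -> mk a (lo i) = i.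
Proof. by move=> <-; exact: mk_hilo. Qed.

Lemma Phi_Sperm st : is_Sperm (Phi st).
Proof.
apply/and3P; split.
- apply/forallP => i; case: (mkP i) => a [x ->].
  apply/cards1P; exists (mk ((st.1 a)^-1%g x) (st.2 ((st.1 a)^-1%g x) a)).
  apply/setP => j; case: (mkP j) => b [y ->].
  rewrite !inE Phi_mk mk_eq perm_eqV.
  by case: eqP => [->|] //=; rewrite eq_sym.
- apply/forallP => j; case: (mkP j) => b [y ->].
  apply/cards1P; exists (mk ((st.2 b)^-1%g y) (st.1 ((st.2 b)^-1%g y) b)).
  apply/setP => i; case: (mkP i) => a [x ->].
  rewrite !inE Phi_mk mk_eq andbC perm_eqV.
  by case: eqP => [->|] //=; rewrite eq_sym.
- apply/forallP => a; apply/forallP => b.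
  apply/cards1P; exists (mk a (st.1 a b), mk b (st.2 b a)).
  apply/setP => [[i j]]; case: (mkP i) => a1 [x ->]; case: (mkP j) => b1 [y ->].
  rewrite in_set1 in_set !divn_hi !hi_mk Phi_mk xpair_eqE !mk_eq.
  case: (a1 =P a) => [->|]; case: (b1 =P b) => [->|]; rewrite ?andbF ?andbT //=.
  by rewrite [x == _]eq_sym [y == _]eq_sym.
Qed.

Lemma Phi_inj : injective Phi.
Proof.
move=> [s t] [s' t'] E.
have H a b := congr1 (fun M : 'M[bool]_(n * n) => M (mk a (s a b)) (mk b (t b a))) E.
have {}H a b : (s' a b == s a b) && (t' b a == t b a).
  by have := H a b; rewrite /= !Phi_mk /= !eqxx.
congr pair; apply/ffunP => a; apply/permP => b.
- by have /andP[/eqP -> _] := H a b.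
- by have /andP[_ /eqP ->] := H b a.
Qed.

Lemma Sperm_Phi B : is_Sperm B -> exists st, B = Phi st.
Proof.
case/and3P => /forallP Hr /forallP Hc /forallP Hb.
have Ur i j1 j2 : B i j1 -> B i j2 -> j1 = j2.
  move: (Hr i) => /cards1P [j0 Hj0] H1 H2.
  have : j1 \in [set j0] by rewrite -Hj0 inE.
  have : j2 \in [set j0] by rewrite -Hj0 inE.
  by rewrite !in_set1 => /eqP -> /eqP ->.
have Uc j i1 i2 : B i1 j -> B i2 j -> i1 = i2.
  move: (Hc j) => /cards1P [i0 Hi0] H1 H2.
  have : i1 \in [set i0] by rewrite -Hi0 inE.
  have : i2 \in [set i0] by rewrite -Hi0 inE.
  by rewrite !in_set1 => /eqP -> /eqP ->.
pose blk a b := odflt (mk a b, mk a b)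
   [pick p | [&& B p.1 p.2, hi p.1 == a & hi p.2 == b]].
have Blk a b : [/\ B (blk a b).1 (blk a b).2, hi (blk a b).1 = a,
   hi (blk a b).2 = b & forall q, B q.1 q.2 -> hi q.1 = a -> hi q.2 = b -> q = blk a b].
  move: (Hb a) => /forallP /(_ b); rewrite (eq_finset (fun p => [&& B p.1 p.2, hi p.1 == a & hi p.2 == b])) //.
  move=> /cards1P [p Hp].
  have key q : [&& B q.1 q.2, hi q.1 == a & hi q.2 == b] = (q == p).
    by rewrite -[q == p]in_set1 -Hp in_set.
  have -> : blk a b = p.
    rewrite /blk; case: pickP => [q|H0]; first by rewrite key => /eqP.
    by have := H0 p; rewrite key eqxx.
  have /and3P[? /eqP ? /eqP ?] : [&& B p.1 p.2, hi p.1 == a & hi p.2 == b] by rewrite key.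
  split => // q ? ? ?; apply/eqP; rewrite -key; apply/and3P; split => //; exact/eqP.
pose fs a b := lo (blk a b).1.
pose ft b a := lo (blk a b).2.
have inj_s a : injective (fs a).
  move=> b b' E; have [B1 H1 H2 _] := Blk a b; have [B1' H1' H2' _] := Blk a b'.
  have E1 : (blk a b).1 = (blk a b').1.
    by rewrite -(mk_hilo' H1) -(mk_hilo' H1'); congr mk.
  by rewrite -H2 -H2' (Ur _ _ _ B1 (etrans (congr1 (fun i => B i _) E1) B1')).
have inj_t b : injective (ft b).
  move=> a a' E; have [B1 H1 H2 _] := Blk a b; have [B1' H1' H2' _] := Blk a' b.
  have E1 : (blk a b).2 = (blk a' b).2.
    by rewrite -(mk_hilo' H2) -(mk_hilo' H2'); congr mk.
  by rewrite -H1 -H1' (Uc _ _ _ B1 (etrans (congr1 (fun j => B _ j) E1) B1')).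
exists ([ffun a => perm (inj_s a)], [ffun b => perm (inj_t b)]).
apply/matrixP => i j; case: (mkP i) => a [x ->]; case: (mkP j) => b [y ->].
rewrite Phi_mk /= !ffunE !permE /fs /ft.
have [B1 H1 H2 U] := Blk a b.
apply/idP/andP => [Bxy|[/eqP <- /eqP <-]].
  by rewrite -(U (mk a x, mk b y)) ?hi_mk //= !lo_mk.
by rewrite (mk_hilo' H1) (mk_hilo' H2).
Qed.

End Phi.

Section Disj.
Variable n : nat.
Notation PP := ({ffun 'I_n -> 'S_n} * {ffun 'I_n -> 'S_n})%type.

Definition Ag (sA st : PP) (p : 'I_n * 'I_n) :=
  (sA.1 p.1 p.2 == st.1 p.1 p.2) && (sA.2 p.2 p.1 == st.2 p.2 p.1).

Lemma disj_Phi sA st :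
  mx_disjoint (Phi sA) (Phi st) = [forall p, ~~ Ag sA st p].
Proof.
apply/forallP/forallP => H.
- move=> [a b]; move: (H (mk a (sA.1 a b))) => /forallP /(_ (mk b (sA.2 b a))).
  by rewrite !Phi_mk !eqxx /= /Ag /= eq_sym [sA.2 _ _ == _]eq_sym.
- move=> i; apply/forallP => j; case: (mkP i) => a [x ->]; case: (mkP j) => b [y ->].
  rewrite !Phi_mk; move: (H (a, b)); rewrite /Ag /=; apply: contra.
  by case/andP => /andP[/eqP-> /eqP->] /andP[/eqP -> /eqP ->]; rewrite !eqxx.
Qed.

Lemma card_LHS (A : 'M[bool]_(n * n)) sA : A = Phi sA ->
  #|[set B | is_Sperm B && mx_disjoint A B]| =
  #|[set st : PP | [forall p, ~~ Ag sA st p]]|.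
Proof.
move=> ->; rewrite -[RHS](card_imset _ (@Phi_inj n)).
apply: eq_card => B; rewrite inE; apply/andP/imsetP.
- case=> /Sperm_Phi [st ->] D; exists st => //; by rewrite inE -disj_Phi.
- case=> st; rewrite inE => H ->; split; [exact: Phi_Sperm | by rewrite disj_Phi].
Qed.

End Disj.

Section IE.
Local Open Scope ring_scope.

Lemma PoszSum (I : Type) (r : seq I) (P : pred I) (F : I -> nat) :
  Posz (\sum_(i <- r | P i) F i)%N = \sum_(i <- r | P i) Posz (F i).
Proof. by rewrite -natz natr_sum; apply: eq_bigr => i _; rewrite natz. Qed.

Lemma card_sumZ (T : finType) (P : pred T) :
  Posz #|[set t | P t]| = \sum_t Posz (P t).
Proof.
rewrite -sum1_card PoszSum big_mkcond /=; apply: eq_bigr => t _.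
by rewrite inE; case: (P t).
Qed.

Lemma prod_indZ (K : finType) (P : pred K) (b : K -> bool) :
  \prod_(k | P k) Posz (b k) = Posz [forall k, P k ==> b k].
Proof.
case: (boolP [forall k, _]) => [/forallP H | /forallPn [k]].
  by apply: big1 => k Pk; have := H k; rewrite Pk /= => ->.
rewrite negb_imply => /andP[Pk /negbTE bk].
by rewrite (bigD1 k) //= bk mul0r.
Qed.

Lemma incl_excl (T K : finType) (E : T -> K -> bool) :
  Posz #|[set t | [forall k, ~~ E t k]]| =
  \sum_(f : {ffun K -> bool})
     (-1) ^+ #|[set k | f k]| * Posz #|[set t | [forall k, f k ==> E t k]]|.
Proof.
rewrite card_sumZ.
transitivity (\sum_t \prod_k \sum_(c : bool) (if c then - Posz (E t k) else 1)).
  apply: eq_bigr => t _.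
  rewrite -(prod_indZ xpredT (fun k => ~~ E t k)) /=.
  apply: eq_bigr => k _; rewrite big_bool /=.
  by case: (E t k) => /=; rewrite ?subrr ?addr0.
under eq_bigr => t _ do rewrite bigA_distr_bigA /=.
rewrite exchange_big /=; apply: eq_bigr => f _.
rewrite card_sumZ mulr_sumr; apply: eq_bigr => t _.
rewrite -big_mkcond /=.
rewrite (eq_bigl (fun k => k \in [set k | f k])); last by move=> k; rewrite inE.
rewrite prodrN prod_indZ; congr (_ * Posz (nat_of_bool _)).
by apply/forallP/forallP => H k; move: (H k); rewrite inE.
Qed.

End IE.

Section Count.

Lemma prod_ind (K : finType) (b : K -> bool) :
  (\prod_k (b k : nat) = [forall k, b k])%N.
Proof.
case: (boolP [forall k, _]) => [/forallP H | /forallPn [k /negbTE bk]].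
  by apply: big1 => k _; rewrite H.
by rewrite (bigD1 k) //= bk mul0n.
Qed.

Lemma card_sum (T : finType) (A : {set T}) : #|A| = (\sum_t (t \in A : nat))%N.
Proof. by rewrite -sum1_card big_mkcond /=; apply: eq_bigr => t _; case: (t \in A). Qed.

Lemma card_family_set (I J : finType) (G : I -> {set J}) :
  #|[set g : {ffun I -> J} | [forall i, g i \in G i]]| = (\prod_i #|G i|)%N.
Proof.
under [RHS]eq_bigr => i _ do rewrite card_sum.
rewrite bigA_distr_bigA /= card_sum; apply: eq_bigr => g _.
by rewrite prod_ind inE.
Qed.

Lemma card_perm_fix n (P : pred 'I_n) (pi : 'S_n) :
  #|[set s : 'S_n | [forall b, P b ==> (pi b == s b)]]| = (n - #|[set b | P b]|)`!.
Proof.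
set D := [set b | P b].
have -> : (n - #|D| = #|~: D|)%N.
  by have := cardsC D; rewrite card_ord; lia.
rewrite -card_perm -cardsE -(card_preimset _ (can_inj (mulgK pi))).
apply: eq_card => s; rewrite !inE.
apply/forallP/subsetP => [H x|H b].
  rewrite !inE; apply: contra => Px.
  by have := H x; rewrite Px permM /= => /eqP /perm_inj <-.
apply/implyP => Pb; rewrite permM.
have : b \notin ~: D by rewrite !inE negbK.
apply: contraNT => ne; apply: H; rewrite !inE.
by apply: contra ne => /eqP ->.
Qed.

Variable n : nat.
Notation PP := ({ffun 'I_n -> 'S_n} * {ffun 'I_n -> 'S_n})%type.

Lemma card_N (sA : PP) (f : {ffun 'I_n * 'I_n -> bool}) :
  #|[set st : PP | [forall p, f p ==> Ag sA st p]]| =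
  (\prod_a (n - #|[set b | f (a, b)]|)`! * \prod_b (n - #|[set a | f (a, b)]|)`!)%N.
Proof.
pose G1 a := [set s : 'S_n | [forall b, f (a, b) ==> (sA.1 a b == s b)]].
pose G2 b := [set t : 'S_n | [forall a, f (a, b) ==> (sA.2 b a == t a)]].
transitivity (#|setX [set s : {ffun 'I_n -> 'S_n} | [forall a, s a \in G1 a]]
                     [set t : {ffun 'I_n -> 'S_n} | [forall b, t b \in G2 b]]|).
  apply: eq_card => -[s t]; rewrite !inE /=.
  apply/forallP/andP => [H|[/forallP H1 /forallP H2] [a b]].
    split; apply/forallP => c; rewrite inE; apply/forallP => d; apply/implyP => Hf.
      by have /implyP/(_ Hf)/andP[] := H (c, d).
    by have /implyP/(_ Hf)/andP[] := H (d, c).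
  apply/implyP => Hf; rewrite /Ag /=.
  move: (H1 a) (H2 b); rewrite !inE => /forallP/(_ b)/implyP/(_ Hf) ->.
  by move=> /forallP/(_ a)/implyP/(_ Hf) ->.
rewrite cardsX !card_family_set; congr (_ * _)%N; apply: eq_bigr => a _.
  exact: card_perm_fix.
exact: card_perm_fix.
Qed.

End Count.

Section Psi.

Lemma prod_part m n (f : 'I_m -> nat) (h : nat -> nat) :
  (0 < n)%N -> (forall a, f a <= n)%N -> (forall k, n.-1 <= k -> h k = 1)%N ->
  (\prod_a h (f a) = \prod_(0 <= k < n.-1) h k ^ #|[set a | f a == k]|)%N.
Proof.
move=> n0 fn h1.
have -> : (\prod_(0 <= k < n.-1) h k ^ #|[set a | f a == k]| =
          \prod_(0 <= k < n.+1) h k ^ #|[set a | f a == k]|)%N.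
  rewrite [RHS](@big_cat_nat _ _ _ n.-1) /=; last (by lia); last by [].
  rewrite [X in (_ = _ * X)%N]big1_seq ?muln1 //.
  by move=> k /andP[_]; rewrite mem_index_iota => /andP[Hk _]; rewrite h1 // exp1n.
rewrite big_mkord.
rewrite (partition_big (fun a => inord (f a) : 'I_n.+1) xpredT) //=.
apply: eq_bigr => k _.
rewrite -prod_nat_const.
apply: eq_big => a.
  by rewrite inE -val_eqE /= inordK // ltnS.
by move=> /eqP <-; rewrite inordK // ltnS.
Qed.

Definition rr n (M : 'M[bool]_n) (a : 'I_n) := #|[set j | M a j]|.
Definition cc n (M : 'M[bool]_n) (b : 'I_n) := #|[set i | M i b]|.

Lemma psi_prod n (M : 'M[bool]_n) : (0 < n)%N ->
  (\prod_(0 <= i < n.-1) (n - i)`! ^ psi_ i M =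
   \prod_a (n - rr M a)`! * \prod_b (n - cc M b)`!)%N.
Proof.
move=> n0.
rewrite /psi_ (eq_bigr (fun i => (n - i)`! ^ r_ i M * (n - i)`! ^ c_ i M)%N);
  last by move=> i _; rewrite expnD.
rewrite big_split /=.
have h1 k : (n.-1 <= k -> (fun k => (n - k)`!) k = 1)%N.
  move=> Hk /=; have : (n - k <= 1)%N by lia.
  by case: (n - k) => [|[|m]] // H.
symmetry; congr (_ * _)%N.
  rewrite (@prod_part n n (rr M) (fun k => (n - k)`!)) //.
  by move=> a; rewrite /rr -[X in (_ <= X)%N](card_ord n) max_card.
rewrite (@prod_part n n (cc M) (fun k => (n - k)`!)) //.
by move=> a; rewrite /cc -[X in (_ <= X)%N](card_ord n) max_card.
Qed.

End Psi.

Section Classes.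
Local Open Scope ring_scope.
Variable n : nat.

Definition GG (M : 'M[bool]_n) : int :=
  (-1) ^+ eps M * Posz (\prod_(0 <= i < n.-1) (n - i)`! ^ psi_ i M)%N.

Lemma eps_rp (s : 'S_n) M : eps (row_perm s M) = eps M.
Proof.
have inj : injective (fun p : 'I_n * 'I_n => ((s^-1)%g p.1, p.2)).
  by move=> [a b] [c d] /= [/perm_inj -> ->].
rewrite /eps -(card_preimset _ inj); apply: eq_card => p; rewrite !inE mxE /=.
by rewrite permKV.
Qed.

Lemma r_rp (s : 'S_n) M k : r_ k (row_perm s M) = r_ k M.
Proof.
rewrite /r_ -(card_preimset _ (@perm_inj _ (s^-1)%g)); apply: eq_card => a; rewrite !inE.
by congr (_ == k); apply: eq_card => j; rewrite !inE mxE permKV.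
Qed.

Lemma c_rp (s : 'S_n) M k : c_ k (row_perm s M) = c_ k M.
Proof.
rewrite /c_; apply: eq_card => b; rewrite !inE.
rewrite -(card_preimset _ (@perm_inj _ (s^-1)%g)).
by congr (_ == k); apply: eq_card => i; rewrite !inE mxE permKV.
Qed.

Lemma GG_rp (s : 'S_n) M : GG (row_perm s M) = GG M.
Proof.
rewrite /GG eps_rp; congr (_ * Posz _); apply: eq_bigr => i _.
by rewrite /psi_ r_rp c_rp.
Qed.

Lemma rowclassP (M' M : 'M[bool]_n) : reflect (exists s : 'S_n, M' = row_perm s M) (M' \in rowclass M).
Proof.
rewrite inE; apply: (iffP existsP) => [[s /eqP ->]|[s ->]]; by exists s.
Qed.

Lemma rowclass_id (M : 'M[bool]_n) : M \in rowclass M.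
Proof. by apply/rowclassP; exists 1%g; rewrite row_perm1. Qed.

Lemma rowclass_eq (M' M : 'M[bool]_n) : M' \in rowclass M -> rowclass M' = rowclass M.
Proof.
case/rowclassP => s ->; apply/setP => B; apply/rowclassP/rowclassP => [[t ->]|[u ->]].
  by exists (t * s)%g; rewrite row_permM.
by exists (u * s^-1)%g; rewrite -row_permM mulgKV.
Qed.

Lemma rowclass_inv (M' M : 'M[bool]_n) : M' \in rowclass M -> GG M' = GG M /\ eps M' = eps M.
Proof. by case/rowclassP => s ->; rewrite GG_rp eps_rp. Qed.

Lemma crep_in (C : {set 'M[bool]_n}) : C \in Bbar_classes n -> crep C \in C.
Proof.
case/imsetP => M0 _ ->; rewrite /crep; case: pickP => [B //|H].
by have := H M0; rewrite rowclass_id.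
Qed.

Lemma class_sum :
  \sum_(C in Bbar_classes n | (2 <= eps (crep C))%N)
     (-1) ^+ eps (crep C) * (#|C|)%:Z *
     (\prod_(0 <= i < n.-1) ((n - i)`! ^ psi_ i (crep C))%N)%:Z =
  \sum_(M | (2 <= eps M)%N) GG M.
Proof.
rewrite [RHS](partition_big (fun M => rowclass M) (mem (Bbar_classes n))) /=; last first.
  by move=> M _; apply/imsetP; exists M.
rewrite big_mkcondr /=; apply: eq_bigr => C HC.
have Hc := crep_in HC.
case/imsetP: HC Hc => M0 _ -> Hc.
have [Gc Ec] := rowclass_inv Hc.
rewrite (eq_bigl (fun M => (M \in rowclass M0) && (2 <= eps (crep (rowclass M0))))%N);
  last first.
  move=> M; case: (boolP (M \in rowclass M0)) => HM.
    by rewrite (rowclass_eq HM) eqxx andbT Ec (rowclass_inv HM).2.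
  rewrite /=; apply/negbTE; apply: contra HM => /andP[_ /eqP <-].
  exact: rowclass_id.
rewrite (eq_bigr (fun=> GG (crep (rowclass M0)))); last first.
  by move=> M /andP[HM _]; rewrite (rowclass_inv HM).1 Gc.
case: (2 <= _)%N; last by rewrite big_pred0 // => M; rewrite andbF.
rewrite (eq_bigl (mem (rowclass M0))); last by move=> M; rewrite andbT.
by rewrite sumr_const /GG -mulr_natr natz mulrAC.
Qed.

End Classes.

Section Small.
Local Open Scope ring_scope.
Variable n : nat.

Definition Dl (p : 'I_n * 'I_n) : 'M[bool]_n := \matrix_(i, j) ((i, j) == p).

Lemma GG_alt (M : 'M[bool]_n) : (0 < n)%N ->
  GG M = (-1) ^+ eps M * Posz (\prod_a (n - rr M a)`! * \prod_b (n - cc M b)`!)%N.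
Proof. by move=> n0; rewrite /GG psi_prod. Qed.

Lemma eps0 (M : 'M[bool]_n) : (eps M == 0)%N = (M == const_mx false).
Proof.
rewrite cards_eq0; apply/eqP/eqP => [H|->].
  apply/matrixP => i j; rewrite mxE; apply/negbTE.
  by move/setP: H => /(_ (i, j)); rewrite !inE /= => ->.
by apply/setP => p; rewrite !inE mxE.
Qed.

Lemma eps_Dl p : eps (Dl p) = 1%N.
Proof.
rewrite /eps -(cards1 p); apply: eq_card => -[i j]; rewrite !inE mxE.
by [].
Qed.

Lemma Dl_inj : injective Dl.
Proof.
move=> p q E; have := congr1 (fun M : 'M[bool]_n => M p.1 p.2) E.
by rewrite /= !mxE -surjective_pairing eqxx => /esym/eqP.
Qed.

Lemma eps1 (M : 'M[bool]_n) :
  (eps M == 1)%N = (M \in [set Dl p | p in [set: 'I_n * 'I_n]]).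
Proof.
apply/idP/imsetP => [/cards1P [p Hp]|[p _ ->]]; last by rewrite eps_Dl.
exists p; rewrite ?inE //; apply/matrixP => i j; rewrite mxE.
by move/setP: Hp => /(_ (i, j)); rewrite !inE.
Qed.

Lemma rr_Dl p a : rr (Dl p) a = (a == p.1).
Proof.
case: p => p1 p2; rewrite /rr /=; case: (a =P p1) => [->|ne] /=.
  rewrite -(cards1 p2); apply: eq_card => j; rewrite !inE mxE.
  by rewrite xpair_eqE eqxx.
rewrite -(cards0 'I_n); apply: eq_card => j; rewrite !inE mxE xpair_eqE.
by case: eqP.
Qed.

Lemma cc_Dl p b : cc (Dl p) b = (b == p.2).
Proof.
case: p => p1 p2; rewrite /cc /=; case: (b =P p2) => [->|ne] /=.
  rewrite -(cards1 p1); apply: eq_card => j; rewrite !inE mxE.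
  by rewrite xpair_eqE eqxx andbT.
rewrite -(cards0 'I_n); apply: eq_card => j; rewrite !inE mxE xpair_eqE.
by case: (_ =P p2); rewrite ?andbF.
Qed.

Lemma prod_one (c : 'I_n) :
  (\prod_a (n - (a == c))`! = (n.-1)`! * n`! ^ n.-1)%N.
Proof.
rewrite (bigD1 c) //= eqxx subn1; congr (_ * _)%N.
rewrite (eq_bigr (fun=> n`!)); last by move=> a /negbTE ->; rewrite subn0.
by rewrite prod_nat_const cardC1 card_ord.
Qed.

Lemma prod_zero :
  (\prod_(a : 'I_n) (n - 0)`! = n`! ^ n)%N.
Proof. by rewrite subn0 prod_nat_const card_ord. Qed.

Lemma small : (0 < n)%N ->
  \sum_(M : 'M[bool]_n | ~~ (2 <= eps M)%N) GG M = 0.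
Proof.
move=> n0.
rewrite (bigID (fun M => eps M == 0)%N) /=.
rewrite (eq_bigl (fun M => M == const_mx false)); last first.
  by move=> M; rewrite -eps0; case: (eps M) => [|[|k]].
rewrite big_pred1_eq.
rewrite (eq_bigl (fun M => M \in [set Dl p | p in [set: 'I_n * 'I_n]])); last first.
  move=> M; rewrite -eps1; case: (eps M) => [|[|k]] //.
rewrite big_imset /=; last by move=> p q _ _; apply: Dl_inj.
rewrite (eq_bigr (fun=> - Posz (((n.-1)`! * n`! ^ n.-1) * ((n.-1)`! * n`! ^ n.-1))%N)); last first.
  move=> p _; rewrite GG_alt // eps_Dl expr1 mulN1r.
  by congr (- Posz (_ * _)); under eq_bigr => a _ do rewrite ?rr_Dl ?cc_Dl; exact: prod_one.
rewrite sumr_const cardsT card_prod card_ord GG_alt //.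
have -> : eps (const_mx false : 'M[bool]_n) = 0%N by apply/eqP; rewrite eps0.
rewrite expr0 mul1r.
have Hr a : rr (const_mx false : 'M[bool]_n) a = 0%N.
  by rewrite /rr -(cards0 'I_n); apply: eq_card => j; rewrite !inE mxE.
have Hc a : cc (const_mx false : 'M[bool]_n) a = 0%N.
  by rewrite /cc -(cards0 'I_n); apply: eq_card => j; rewrite !inE mxE.
rewrite (eq_bigr (fun a : 'I_n => (n - 0)`!)%N); last by move=> a _; rewrite Hr.
rewrite [X in (_ * X)%N](eq_bigr (fun a : 'I_n => (n - 0)`!)%N); last by move=> a _; rewrite Hc.
rewrite prod_zero mulNrn -mulr_natr natz -PoszM.
apply/eqP; rewrite subr_eq0; apply/eqP; congr Posz.
case: n n0 => // m _ /=.
rewrite factS expnS.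
set x := m`!; set y := ((m.+1)`! ^ m)%N.
nia.
Qed.

End Small.

Local Open Scope ring_scope.

Lemma mat_ffun_bij n :
  bijective (fun M : 'M[bool]_n => [ffun p : 'I_n * 'I_n => M p.1 p.2]).
Proof.
exists (fun f : {ffun 'I_n * 'I_n -> bool} => \matrix_(i, j) f (i, j)).
  by move=> M; apply/matrixP => i j; rewrite mxE ffunE.
by move=> f; apply/ffunP => -[i j]; rewrite ffunE mxE.
Qed.

Theorem mainTheorem5 (n : nat) (A : 'M[bool]_(n * n)) :
  (2 <= n)%N -> is_Sperm A ->
  (#|[set B : 'M[bool]_(n * n) | is_Sperm B && mx_disjoint A B]|%:Z : int) =
  \sum_(C in Bbar_classes n | (2 <= eps (crep C))%N)
     (-1) ^+ eps (crep C) * (#|C|)%:Z *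
     (\prod_(0 <= i < n.-1) ((n - i)`! ^ psi_ i (crep C))%N)%:Z.
Proof.
move=> n2 /Sperm_Phi [sA HA].
have n0 : (0 < n)%N by lia.
rewrite class_sum (card_LHS HA) (incl_excl (fun st => Ag sA st)).
rewrite (reindex _ (onW_bij _ (mat_ffun_bij n))) /=.
transitivity (\sum_(M : 'M[bool]_n) GG M).
  apply: eq_bigr => M _; rewrite card_N GG_alt //; congr (_ ^+ _ * Posz (_ * _)).
  - by apply: eq_card => p; rewrite !inE ffunE.
  - by apply: eq_bigr => a _; rewrite /rr; congr (_ - _)`!; apply: eq_card => j; rewrite !inE ffunE.
  - by apply: eq_bigr => b _; rewrite /cc; congr (_ - _)`!; apply: eq_card => j; rewrite !inE ffunE.
by rewrite (bigID (fun M => 2 <= eps M)%N) /= small // addr0.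
Qed.
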